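(* Let $D$ be a division ring and $R$ a maximal subring of $D$. Then either there exists $\lambda\in D\setminus R$ with $\lambda R\subseteq R\lambda$ (equivalently $R\lambda\subseteq\lambda R$), or $N_l(R)=N_r(R)=N(R)=U(R)\cup\{0\}$.
   Context: All rings are associative unital and subrings share the identity. A maximal subring of a ring $T$ is a proper subring maximal under inclusion among proper subrings of $T$. For a subring $R$ of a division ring $D$: $N_l(R)=\{x\in D: Rx\subseteq xR\}$, $N_r(R)=\{x\in D: xR\subseteq Rx\}$, $N(R)=\{x\in D: xR=Rx\}$; $U(R)$ is the set of units of $R$. *)

(* Defs.v *)
From HB Require Import structures.
From mathcomp Require Import all_boot all_order all_algebra.
Set Implicit Arguments. Unset Strict Implicit. Unset Printing Implicit Defensive.
Import GRing.Theory.
Local Open Scope ring_scope.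

Definition is_division_ring (D : unitRingType) : Prop :=
  forall x : D, x != 0 -> x \is a GRing.unit.

Definition is_subring (D : unitRingType) (R : D -> Prop) : Prop :=
  R 1 /\ (forall x y, R x -> R y -> R (x - y)) /\ (forall x y, R x -> R y -> R (x * y)).

Definition is_proper (D : unitRingType) (R : D -> Prop) : Prop := exists x, ~ R x.

Definition is_maximal_subring (D : unitRingType) (R : D -> Prop) : Prop :=
  is_subring R /\ is_proper R /\
  forall S : D -> Prop, is_subring S -> is_proper S ->
    (forall x, R x -> S x) -> forall x, S x -> R x.

Definition Nl (D : unitRingType) (R : D -> Prop) (x : D) : Prop :=
  forall r, R r -> exists r', R r' /\ r * x = x * r'.
Definition Nr (D : unitRingType) (R : D -> Prop) (x : D) : Prop :=
  forall r, R r -> exists r', R r' /\ x * r = r' * x.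
Definition Nn (D : unitRingType) (R : D -> Prop) (x : D) : Prop :=
  Nl R x /\ Nr R x.
Definition UR (D : unitRingType) (R : D -> Prop) (x : D) : Prop :=
  R x /\ exists y, R y /\ x * y = 1 /\ y * x = 1.

(* Main.v *)
Require Import Defs.
From mathcomp Require Import all_boot all_order all_algebra.
From Stdlib Require Import Classical.
Import GRing.Theory.
Local Open Scope ring_scope.

Section Aux.
Variables (D : unitRingType) (R : D -> Prop).
Hypothesis HD : is_division_ring D.
Hypothesis HM : is_maximal_subring R.

Lemma R0 : R 0.
Proof. case: HM => [[H1 [Hs _]] _]; by rewrite -(subrr (1:D)); apply: Hs. Qed.

Lemma conj_sub (x y : D) : x * y = 1 -> y * x = 1 ->
  (forall r, R r -> R (x * r * y)) -> forall d, R (x * d * y) -> R d.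
Proof.
move=> xy yx Hin.
case: HM => [[H1 [Hs Hm]] [[z Hz] Hmax]].
pose S := fun d => R (x * d * y).
have conjM : forall a b, x * (a * b) * y = (x * a * y) * (x * b * y).
  move=> a b; by rewrite !mulrA -(mulrA (x * a) y x) yx mulr1.
apply: (Hmax S).
- split; first by rewrite /S mulr1 xy.
  split.
  + move=> a b Ha Hb; rewrite /S mulrBr mulrBl; exact: Hs.
  + move=> a b Ha Hb; rewrite /S conjM; exact: Hm.
- exists (y * z * x); rewrite /S !mulrA xy mul1r -mulrA xy mulr1 //.
- exact: Hin.
Qed.

Lemma NrNl (x : D) : x != 0 -> Nr R x -> Nl R x.
Proof.
move=> x0 Hr; have u := HD _ x0.
have xy : x * x^-1 = 1 by rewrite mulrV.
have yx : x^-1 * x = 1 by rewrite mulVr.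
have Hc := conj_sub _ _ xy yx.
have Hin : forall r, R r -> R (x * r * x^-1).
  move=> r Rr; have [r' [Rr' e]] := Hr r Rr.
  by rewrite e -mulrA xy mulr1.
move=> r Rr; exists (x^-1 * r * x); split.
  apply: (Hc Hin); by rewrite !mulrA xy mul1r -mulrA xy mulr1.
by rewrite !mulrA xy mul1r.
Qed.

Lemma NlNr (x : D) : x != 0 -> Nl R x -> Nr R x.
Proof.
move=> x0 Hl; have u := HD _ x0.
have xy : x * x^-1 = 1 by rewrite mulrV.
have yx : x^-1 * x = 1 by rewrite mulVr.
have Hc := conj_sub _ _ yx xy.
have Hin : forall r, R r -> R (x^-1 * r * x).
  move=> r Rr; have [r' [Rr' e]] := Hl r Rr.
  by rewrite -mulrA e !mulrA yx mul1r.
move=> r Rr; exists (x * r * x^-1); split.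
  apply: (Hc Hin); by rewrite !mulrA yx mul1r -mulrA yx mulr1.
by rewrite -!mulrA yx mulr1.
Qed.

Lemma NlinvNr (x : D) : x != 0 -> Nl R x -> Nr R x^-1.
Proof.
move=> x0 Hl r Rr; have u := HD _ x0.
have [r' [Rr' e]] := Hl r Rr; exists r'; split => //.
apply: (mulrI u); rewrite mulrA mulrV // mul1r.
apply: (mulIr u); by rewrite e -!mulrA mulVr // mulr1.
Qed.

Lemma UR_N (x : D) : UR R x \/ x = 0 -> Nl R x /\ Nr R x.
Proof.
case: HM => [[H1 [Hs Hm]] _].
case=> [[Rx [y [Ry [xy yx]]]] | ->].
  split=> r Rr.
    exists (y * r * x); split; first exact: Hm _ _ (Hm _ _ _ Rr) _.
    by rewrite !mulrA xy mul1r.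
  exists (x * r * y); split; first exact: Hm _ _ (Hm _ _ _ Rr) _.
  by rewrite -!mulrA yx mulr1.
split=> r Rr; exists 0; split; rewrite ?R0 ?mulr0 ?mul0r //; exact: R0.
Qed.

End Aux.

Theorem lemma2p2 (D : unitRingType) (R : D -> Prop) :
  is_division_ring D -> is_maximal_subring R ->
  (exists lam : D, ~ R lam /\
     (forall r, R r -> exists r', R r' /\ lam * r = r' * lam))
  \/
  (forall x : D,
     (Nl R x <-> (UR R x \/ x = 0)) /\
     (Nr R x <-> (UR R x \/ x = 0)) /\
     (Nn R x <-> (UR R x \/ x = 0))).
Proof.
move=> HD HM.
case: (classic (exists lam : D, ~ R lam /\
     (forall r, R r -> exists r', R r' /\ lam * r = r' * lam))) => [H|H]; first by left.
right.
have NrR : forall x, Nr R x -> R x.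
  move=> x Hx; apply: NNPP => Hn; apply: H; by exists x.
have key : forall x, Nl R x -> UR R x \/ x = 0.
  move=> x Hl; case: (eqVneq x 0) => [->|x0]; first by right.
  left; have u := HD _ x0.
  split; first exact: NrR (@NlNr _ _ HD HM _ x0 Hl).
  exists x^-1; split; last by rewrite mulrV ?mulVr.
  apply: NrR; apply: NlinvNr => //.
have key2 : forall x, Nr R x -> UR R x \/ x = 0.
  move=> x Hr; case: (eqVneq x 0) => [->|x0]; first by right.
  exact: key (@NrNl _ _ HD HM _ x0 Hr).
move=> x; split; [|split].
- split; first exact: key. by move/(@UR_N _ _ HM x) => [].
- split; first exact: key2. by move/(@UR_N _ _ HM x) => [].
- split; first by case=> Hl _; exact: key.
  exact: (@UR_N _ _ HM x).
Qed.
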